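(* Let $n\ge5$ be odd, $k=\frac{n-3}{2}$, and let $V$ be an $n$-element set with $V=\{v_1,\dots,v_{2k+1},s,t\}$. Define $a\colon V^+\times V^-\to\mathbb{Z}$ (where $V^\pm=\{v^\pm\colon v\in V\}$) by $a(u^+,u^-)=0$ for $u\in V$; $a(v_i^+,v_j^-)=\bigl|2k+1-2|i-j|\bigr|$ for $i\ne j$; $a(u^+,v^-)=k$ if exactly one of $u,v$ lies in $\{s,t\}$; and $a(s^+,t^-)=a(t^+,s^-)=1$. Let $\mu\in\mathbb{R}\setminus\{0\}$ and $\lambda\in\mathbb{R}^{V^+\cup V^-}$, and define $a^{\mu,\lambda}(u^+,v^-)=\mu\, a(u^+,v^-)+\lambda_{u^+}+\lambda_{v^-}$ for all $u,v\in V$. If all entries $a^{\mu,\lambda}(u^+,v^-)$ are integers, then (1) $\max_{u,v\in V}|a^{\mu,\lambda}(u^+,v^-)|\ge\frac{n-4}{2}$, and (2) the number of distinct values among $\{a^{\mu,\lambda}(u^+,v^-)\colon u,v\in V\}$ is at least $\sqrt{\frac{n-1}{2}}$.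
   Context: The function $a$ is the coefficient vector (indexed by the edges $\{u^+,v^-\}$ of the complete bipartite graph on $V^+\cup V^-$) of the canonical transformation of the constraint for the dominant of the odd cycle polytope of $K_n$ induced by the cycle $(v_1,\dots,v_{2k+1})$; the vectors $a^{\mu,\lambda}$ are exactly the coefficient vectors obtained from it by scaling with $\mu$ and adding linear combinations of the degree equations $y(\delta(w))=1$. *)

(* Defs.v *)
From HB Require Import structures.
From mathcomp Require Import all_boot all_order all_algebra.
Set Implicit Arguments. Unset Strict Implicit. Unset Printing Implicit Defensive.
Import Order.TTheory GRing.Theory Num.Theory.
Local Open Scope ring_scope.

(* Labelling of V = 'I_n (n = 2k+3):
   v_{i+1} is the ordinal i for i < 2k+1 = n-2,  s is n-2, t is n-1.
   a u v stands for a(u^+, v^-). *)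
Definition odd_cycle_a (n : nat) (u v : 'I_n) : int :=
  let m := (n - 2)%N in
  let k := ((n - 3) %/ 2)%N in
  if u == v then 0
  else if (u < m)%N && (v < m)%N then
    (`| m%:Z - 2 * `|u%:Z - v%:Z| | : int)
  else if (u < m)%N || (v < m)%N then k%:Z
  else 1.

Definition a_mu_lambda (R : rcfType) (n : nat) (mu : R)
  (lamp lamm : 'I_n -> R) (u v : 'I_n) : R :=
  mu * (odd_cycle_a u v)%:~R + lamp u + lamm v.

Definition amul_values (R : rcfType) (n : nat) (mu : R)
  (lamp lamm : 'I_n -> R) : seq R :=
  [seq a_mu_lambda mu lamp lamm uv.1 uv.2 | uv <- enum [set: 'I_n * 'I_n]].

(* Main.v *)
Require Import Defs.
From HB Require Import structures.
From mathcomp Require Import all_boot all_order all_algebra.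
From mathcomp Require Import zify ring lra.
Import Order.TTheory GRing.Theory Num.Theory.
Local Open Scope ring_scope.

Theorem lemma14 (R : rcfType) (n : nat) (mu : R) (lamp lamm : 'I_n -> R) :
  odd n -> (5 <= n)%N -> mu != 0 ->
  (forall u v : 'I_n, exists z : int, a_mu_lambda mu lamp lamm u v = z%:~R) ->
  (exists u v : 'I_n, (n%:R - 4) / 2 <= `|a_mu_lambda mu lamp lamm u v|)
  /\ Num.sqrt ((n%:R - 1) / 2 : R) <= (size (undup (amul_values mu lamp lamm)))%:R :> R.
Proof.
move=> odd_n n5 mu0 hint.
have [k hk] : exists k, n = k.*2.+3.
  by exists (n./2 - 1)%N; have := odd_double_half n; rewrite odd_n; lia.
subst n.
have k1 : (1 <= k)%N by lia.
pose o (j : nat) : 'I_(k.*2.+3) := inord j.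
have oK j : (j < k.*2.+3)%N -> val (o j) = j by move=> h; exact: inordK.
have e3 : ((k.*2.+3 - 3) %/ 2 = k)%N by lia.
have e2 : (k.*2.+3 - 2 = k.*2.+1)%N by lia.
have aE i j : (i < k.*2.+3)%N -> (j < k.*2.+3)%N -> odd_cycle_a (o i) (o j) =
   if i == j then 0 else if (i < k.*2.+1)%N && (j < k.*2.+1)%N then
     `|(k.*2.+1)%:Z - 2 * `|i%:Z - j%:Z| |
   else if (i < k.*2.+1)%N || (j < k.*2.+1)%N then k%:Z else 1.
  by move=> hi hj; rewrite /odd_cycle_a -val_eqE !oK // e2 e3.
have av i j (v : int) : (i < k.*2.+3)%N -> (j < k.*2.+3)%N ->
   (if i == j then 0 else if (i < k.*2.+1)%N && (j < k.*2.+1)%N then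
     `|(k.*2.+1)%:Z - 2 * `|i%:Z - j%:Z| |
   else if (i < k.*2.+1)%N || (j < k.*2.+1)%N then k%:Z else 1) = v ->
   odd_cycle_a (o i) (o j) = v.
  by move=> hi hj <-; rewrite aE.
pose s := o k.*2.+1; pose t := o k.*2.+2; pose z := o 0; pose w := o 1.
have v_st : odd_cycle_a s t = 1 by apply: av; try lia; (repeat case: ifP); lia.
have v_zs : odd_cycle_a z s = k by apply: av; try lia; (repeat case: ifP); lia.
have v_ss : odd_cycle_a s s = 0 by rewrite /odd_cycle_a eqxx.
have v_zt : odd_cycle_a z t = k by apply: av; try lia; (repeat case: ifP); lia.
have v_zw : odd_cycle_a z w = 2 * k%:Z - 1 by apply: av; try lia; (repeat case: ifP); lia.
have v_wz : odd_cycle_a w z = 2 * k%:Z - 1 by apply: av; try lia; (repeat case: ifP); lia.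
have v_zz : odd_cycle_a z z = 0 by rewrite /odd_cycle_a eqxx.
have v_ww : odd_cycle_a w w = 0 by rewrite /odd_cycle_a eqxx.
set A := a_mu_lambda mu lamp lamm.
have Emu : A s t + A z s - A s s - A z t = mu.
  by rewrite /A /a_mu_lambda v_st v_zs v_ss v_zt; ring.
have E2 : A z w + A w z - A z z - A w w = mu * (4 * k%:R - 2).
  by rewrite /A /a_mu_lambda v_zw v_wz v_zz v_ww; ring.
have [zm hzm] : exists zz : int, mu = zz%:~R.
  have [a1 h1] := hint s t; have [a2 h2] := hint z s.
  have [a3 h3] := hint s s; have [a4 h4] := hint z t.
  by exists (a1 + a2 - a3 - a4); rewrite -Emu /A h1 h2 h3 h4 !intrD !intrN.
have zm0 : zm != 0 by apply: contraNneq mu0 => e; rewrite hzm e.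
have mu1 : (1 <= mu) || (mu <= -1).
  rewrite hzm -[-1]/((-1)%:~R) -[1 : R]/(1%:~R) !ler_int; lia.
have nE : (k.*2.+3)%:R = 2 * k%:R + 3 :> R by rewrite -addn3 natrD -muln2 natrM; ring.
have kR : 1 <= k%:R :> R by rewrite ler1n.
have nrm (x : R) : x <= `|x| /\ - x <= `|x|.
  by split; [exact: ler_norm | rewrite -normrN; exact: ler_norm].
split.
  rewrite nE.
  case: (lerP ((2 * k%:R + 3 - 4) / 2) `|A z w|) => h1; first by exists z, w.
  case: (lerP ((2 * k%:R + 3 - 4) / 2) `|A w z|) => h2; first by exists w, z.
  case: (lerP ((2 * k%:R + 3 - 4) / 2) `|A z z|) => h3; first by exists z, z.
  case: (lerP ((2 * k%:R + 3 - 4) / 2) `|A w w|) => h4; first by exists w, w.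
  exfalso.
  have [n1 n1'] := nrm (A z w); have [n2 n2'] := nrm (A w z).
  have [n3 n3'] := nrm (A z z); have [n4 n4'] := nrm (A w w).
  case/orP: mu1 => hm.
    have : 4 * k%:R - 2 <= mu * (4 * k%:R - 2) by nra.
    lra.
  have : mu * (4 * k%:R - 2) <= - (4 * k%:R - 2) by nra.
  lra.
set S := undup (amul_values mu lamp lamm).
pose F j := (A s (o j), A z (o j)).
have D j : (j < k.+1)%N -> A s (o j) - A z (o j) =
    mu * (k%:Z - (if j == 0%N then 0 else `|(k.*2.+1)%:Z - 2 * `|0%:Z - j%:Z| |))%:~R
    + (lamp s - lamp z).
  move=> hj; rewrite /A /a_mu_lambda.
  have -> : odd_cycle_a s (o j) = k by apply: av; try lia; (repeat case: ifP); lia.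
  have -> : odd_cycle_a z (o j) =
     (if j == 0%N then 0 else `|(k.*2.+1)%:Z - 2 * `|0%:Z - j%:Z| |).
    by apply: av; try lia; (repeat case: ifP); lia.
  rewrite intrB; ring.
have U : uniq (map F (iota 0 k.+1)).
  rewrite map_inj_in_uniq ?iota_uniq // => j1 j2; rewrite !mem_iota !add0n => h1 h2.
  case=> q1 q2.
  have := D j1 h1; rewrite q1 q2 D // => /addIr /(mulfI mu0) /intr_inj.
  by (repeat case: eqP); lia.
have Sub : {subset map F (iota 0 k.+1) <= allpairs pair S S}.
  move=> x /mapP [j _ ->]; apply: allpairs_f; rewrite mem_undup; apply/mapP.
    by exists (s, o j) => //; rewrite mem_enum in_setT.
  by exists (z, o j) => //; rewrite mem_enum in_setT.
have hsz := uniq_leq_size U Sub.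
rewrite size_map size_iota size_allpairs in hsz.
have -> : ((k.*2.+3)%:R - 1) / 2 = (k.+1)%:R :> R.
  rewrite nE -[(k.+1)%:R]natr1; lra.
have -> : (size S)%:R = Num.sqrt ((size S)%:R ^+ 2) :> R.
  by rewrite sqrtr_sqr ger0_norm.
by rewrite ler_sqrt ?exprn_ge0 // -natrX ler_nat expnS expn1.
Qed.
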